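(* Let $\mathcal{G}=(\mathcal{V},\mathcal{E})$ be an undirected graph with $|\mathcal{N}_i|\ge (d+1)F+1$ for every $i\in\mathcal{V}$, and suppose the misbehaving agents follow the $F$-local attack model. If $\mathcal{G}$ is $((d+1)F+1)$-robust, then when the benign agents run the resilient multi-dimensional consensus algorithm described in the context, all benign agents achieve consensus exponentially regardless of the actions of the misbehaving agents: there is $\bar{x}\in\mathbb{R}^d$ with $x^i(k)\to\bar{x}$ exponentially fast as $k\to\infty$ for all $i\in\mathcal{B}$.
   Context: $\mathcal{G}=(\mathcal{V},\mathcal{E})$ is undirected, $\mathcal{N}_i=\{j\in\mathcal{V}: e_{ij}\in\mathcal{E}\}$. $\mathcal{G}$ is $r$-robust if for every pair of disjoint nonempty subsets $\mathcal{V}_1,\mathcal{V}_2\subsetneq\mathcal{V}$, some agent in $\mathcal{V}_1$ has at least $r$ neighbors outside $\mathcal{V}_1$, or some agent in $\mathcal{V}_2$ has at least $r$ neighbors outside $\mathcal{V}_2$. $\mathcal{V}=\mathcal{B}\cup\mathcal{F}$ disjointly; $\mathcal{F}$ are misbehaving agents, which may send arbitrary (possibly different to different neighbors, possibly colluding) values at each time; $\mathcal{B}$ are benign agents following the algorithm. $F$-local attack model: $|\mathcal{F}\cap\mathcal{N}_i|\le F$ for all $i\in\mathcal{V}$. For a finite multiset $\mathcal{A}\subset\mathbb{R}^d$ of cardinality $m$ (counted with multiplicity) and integer $0\le n\le m$, let $\mathcal{S}(\mathcal{A},n)$ be the collection of all sub-multisets of $\mathcal{A}$ of cardinality $m-n$,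 and $\varPsi(\mathcal{A},n)=\bigcap_{S\in\mathcal{S}(\mathcal{A},n)}\mathrm{Conv}(S)$. Algorithm: each benign agent $i$ has state $x^i(k)\in\mathbb{R}^d$, $x^i(0)$ arbitrary. At each time $k$: (1) $i$ collects in the multiset $\mathcal{X}^i(k)$ the values received from all $j\in\mathcal{N}_i$; (2) with $p=(k \bmod d)+1$, it sorts the points of $\mathcal{X}^i(k)$ in ascending order of their $p$-th entries; (3) $\mathcal{Y}^i(k)$ is the multiset of the first $(d+1)F+1$ sorted points, and $y^i(k)$ is any point of $\varPsi(\mathcal{Y}^i(k),F)$; (4) $\mathcal{Z}^i(k)$ is the multiset of the last $(d+1)F+1$ sorted points, and $z^i(k)$ is any point of $\varPsi(\mathcal{Z}^i(k),F)$; (5) $x^i(k+1)=\frac{1}{3}\big(x^i(k)+y^i(k)+z^i(k)\big)$, which is sent to all neighbors. *)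

(* Defs.v *)
From HB Require Import structures.
From mathcomp Require Import all_boot all_order all_algebra.
From mathcomp Require Import reals.
Set Implicit Arguments. Unset Strict Implicit. Unset Printing Implicit Defensive.
Import Order.TTheory GRing.Theory Num.Theory.
Local Open Scope ring_scope.

Definition nbrs (V : finType) (e : rel V) (i : V) : {set V} := [set j | e i j].

Definition robust (V : finType) (e : rel V) (r : nat) : Prop :=
  forall V1 V2 : {set V}, V1 != set0 -> V2 != set0 ->
    V1 \proper [set: V] -> V2 \proper [set: V] -> [disjoint V1 & V2] ->
    (exists2 i, i \in V1 & (r <= #|nbrs e i :\: V1|)%N) \/
    (exists2 i, i \in V2 & (r <= #|nbrs e i :\: V2|)%N).

Definition F_local (V : finType) (e : rel V) (Fs : {set V}) (F : nat) : Prop :=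
  forall i, (#|Fs :&: nbrs e i| <= F)%N.

Definition conv_hull (R : numDomainType) (d : nat) (S : seq 'rV[R]_d) (x : 'rV[R]_d) : Prop :=
  exists w : 'I_(size S) -> R,
    (forall i, 0 <= w i) /\ \sum_i w i = 1 /\ x = \sum_i w i *: S`_i.

(* x \in Psi(A, n): x lies in Conv(S) for every sub-multiset S of A of
   cardinality |A| - n (sub-multisets are masks of A). *)
Definition Psi (R : numDomainType) (d : nat) (A : seq 'rV[R]_d) (n : nat) (x : 'rV[R]_d) : Prop :=
  forall b : bitseq, size b = size A -> count id b = (size A - n)%N ->
    conv_hull (mask b A) x.

(* The 0-based sorting
   coordinate is k mod d (i.e. p = (k mod d) + 1 in 1-based indexing). *)
Definition resilient_step (R : realFieldType) (d F k : nat) (hd : (0 < d)%N)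
    (X : seq 'rV[R]_d) (xi xnext : 'rV[R]_d) : Prop :=
  let p := Ordinal (ltn_pmod k hd) in
  let q := (d.+1 * F).+1 in
  exists s : seq 'rV[R]_d,
    perm_eq s X /\ sorted (fun a b : 'rV[R]_d => a 0 p <= b 0 p) s /\
    exists y z : 'rV[R]_d,
      Psi (take q s) F y /\ Psi (drop (size s - q) s) F z /\
      xnext = 3^-1 *: (xi + y + z).

(* Main.v *)
Require Import Defs.
From HB Require Import structures.
From mathcomp Require Import classical_sets.
From mathcomp Require Import all_boot all_order all_algebra.
From mathcomp Require Import reals.
From mathcomp Require Import zify ring lra.
Import Order.TTheory GRing.Theory Num.Theory.
Local Open Scope ring_scope.

Set Implicit Arguments. Unset Strict Implicit. Unset Printing Implicit Defensive.

Lemma count_enum_card (T : finType) (A : {set T}) (Q : pred T) :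
  count Q (enum A) = #|[set j in A | Q j]|.
Proof.
rewrite -size_filter -(card_uniqP (filter_uniq Q (enum_uniq (mem A)))) .
by apply: eq_card => j; rewrite inE mem_filter mem_enum andbC.
Qed.

Lemma mask_count (T : Type) (P : pred T) (A : seq T) (n : nat) :
  (n <= count P A)%N -> exists b : bitseq,
    [/\ size b = size A, count id b = n & all P (mask b A)].
Proof.
elim: A n => [|a A IH] n /=.
  by rewrite leqn0 => /eqP ->; exists [::].
case Pa: (P a) => /=; case: n => [|n] Hn.
- have [b [h1 h2 h3]] := IH 0%N (leq0n _).
  by exists (false :: b); rewrite /= h1 h2.
- have [b [h1 h2 h3]] := IH n Hn.
  by exists (true :: b); rewrite /= h1 h2 Pa h3.
- have [b [h1 h2 h3]] := IH 0%N (leq0n _).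
  by exists (false :: b); rewrite /= h1 h2.
- have [b [h1 h2 h3]] := IH n.+1 Hn.
  by exists (false :: b); rewrite /= h1 h2.
Qed.

Lemma conv_le (R : realType) (d : nat) (S : seq 'rV[R]_d) (y : 'rV[R]_d)
    (c : 'I_d) (thr : R) :
  conv_hull S y -> all (fun v : 'rV[R]_d => v 0 c <= thr) S -> y 0 c <= thr.
Proof.
move=> [w [w0 [w1 ->]]] /allP HS.
rewrite summxE.
apply: (@le_trans _ _ (\sum_i w i * thr)); last by rewrite -mulr_suml w1 mul1r.
apply: ler_sum => i _; rewrite mxE ler_wpM2l //.
exact: (HS _ (mem_nth 0 (ltn_ord i))).
Qed.

Lemma conv_ge (R : realType) (d : nat) (S : seq 'rV[R]_d) (y : 'rV[R]_d)
    (c : 'I_d) (thr : R) :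
  conv_hull S y -> all (fun v : 'rV[R]_d => thr <= v 0 c) S -> thr <= y 0 c.
Proof.
move=> [w [w0 [w1 ->]]] /allP HS.
rewrite summxE.
apply: (@le_trans _ _ (\sum_i w i * thr)); first by rewrite -mulr_suml w1 mul1r.
apply: ler_sum => i _; rewrite mxE ler_wpM2l //.
exact: (HS _ (mem_nth 0 (ltn_ord i))).
Qed.

Lemma Psi_le (R : realType) (d : nat) (A : seq 'rV[R]_d) (F : nat) (y : 'rV[R]_d)
    (c : 'I_d) (thr : R) :
  Psi A F y -> (size A - F <= count (fun v : 'rV[R]_d => (v 0 c <= thr)%R) A)%N ->
  y 0 c <= thr.
Proof.
move=> HP /mask_count [b [h1 h2 h3]].
exact: conv_le (HP b h1 h2) h3.
Qed.

Lemma Psi_ge (R : realType) (d : nat) (A : seq 'rV[R]_d) (F : nat) (y : 'rV[R]_d)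
    (c : 'I_d) (thr : R) :
  Psi A F y -> (size A - F <= count (fun v : 'rV[R]_d => (thr <= v 0 c)%R) A)%N ->
  thr <= y 0 c.
Proof.
move=> HP /mask_count [b [h1 h2 h3]].
exact: conv_ge (HP b h1 h2) h3.
Qed.

Lemma take_sorted_count (T : eqType) (r : rel T) (P : pred T) (s : seq T) (q n : nat) :
  transitive r -> sorted r s -> (forall a b, r a b -> P b -> P a) ->
  (n <= count P s)%N -> (n <= q)%N -> (q <= size s)%N ->
  (n <= count P (take q s))%N.
Proof.
move=> rtr srt Pdown Hn nq qs.
case: (boolP (all P (take q s))) => [Hall|].
  move: Hall; rewrite all_count => /eqP ->.
  by rewrite size_take_min (minn_idPl qs).
case/allPn => b bin nPb.
move: srt; rewrite (sorted_pairwise rtr) -{1}(cat_take_drop q s) pairwise_cat.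
case/and3P => /allrelP Hrel _ _.
have H0 : count P (drop q s) = 0%N.
  apply/eqP; rewrite -leqn0 leqNgt -has_count; apply/hasPn => a ain.
  by apply/negP => Pa; move/negP: nPb; apply; apply: Pdown (Hrel _ _ bin ain) Pa.
by move: Hn; rewrite -{1}(cat_take_drop q s) count_cat H0 addn0.
Qed.

Lemma drop_sorted_count (T : eqType) (r : rel T) (P : pred T) (s : seq T) (q n : nat) :
  transitive r -> sorted r s -> (forall a b, r a b -> P a -> P b) ->
  (n <= count P s)%N -> (n <= q)%N -> (q <= size s)%N ->
  (n <= count P (drop (size s - q) s))%N.
Proof.
move=> rtr srt Pup Hn nq qs.
rewrite -count_rev -take_rev.
apply: (@take_sorted_count _ (fun a b => r b a)) => //.
- by move=> a b c' h1 h2; exact: rtr h2 h1.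
- by rewrite rev_sorted.
- by move=> a b h; apply: Pup.
- by rewrite count_rev.
- by rewrite size_rev.
Qed.

Lemma count_take_le (T : Type) (a : pred T) (s : seq T) q :
  (count a (take q s) <= count a s)%N.
Proof. by rewrite -{2}(cat_take_drop q s) count_cat leq_addr. Qed.

Lemma count_drop_le (T : Type) (a : pred T) (s : seq T) q :
  (count a (drop q s) <= count a s)%N.
Proof. by rewrite -{2}(cat_take_drop q s) count_cat leq_addl. Qed.

Lemma step_bounds (R : realType) (d : nat) (hd : (0 < d)%N) (V : finType) (e : rel V)
    (F : nat) (Fs : {set V}) (x : nat -> V -> 'rV[R]_d) (msg : nat -> V -> V -> 'rV[R]_d)
    (k : nat) (i : V) :
  ((d.+1 * F).+1 <= #|nbrs e i|)%N -> F_local e Fs F ->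
  (forall j, j \notin Fs -> msg k j i = x k j) ->
  resilient_step F k hd [seq msg k j i | j <- enum (nbrs e i)] (x k i) (x k.+1 i) ->
  exists y z : 'rV[R]_d, x k.+1 i = 3^-1 *: (x k i + y + z) /\
   (forall (c : 'I_d) thr, (forall j, j \notin Fs -> x k j 0 c <= thr) ->
       y 0 c <= thr /\ z 0 c <= thr) /\
   (forall (c : 'I_d) thr, (forall j, j \notin Fs -> thr <= x k j 0 c) ->
       thr <= y 0 c /\ thr <= z 0 c) /\
   (forall (c : 'I_d) thr, (k %% d)%N = c ->
      ((d * F).+1 <= #|[set j in nbrs e i | (j \notin Fs) && (x k j 0 c <= thr)%R]|)%N ->
      y 0 c <= thr) /\
   (forall (c : 'I_d) thr, (k %% d)%N = c ->
      ((d * F).+1 <= #|[set j in nbrs e i | (j \notin Fs) && (thr <= x k j 0 c)%R]|)%N ->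
      thr <= z 0 c).
Proof.
move=> Hdeg Floc Hmsg.
rewrite /resilient_step /=.
set X := [seq msg k j i | j <- enum (nbrs e i)].
set q := (d.+1 * F).+1.
move=> [s [Hperm [Hsort [y [z [Hy [Hz Hx]]]]]]].
exists y, z; split; first exact: Hx.
have sizeX : size X = #|nbrs e i| by rewrite size_map -cardE.
have sizes : size s = #|nbrs e i| by rewrite (perm_size Hperm).
have qs : (q <= size s)%N by rewrite sizes.
have sizeY : size (take q s) = q by rewrite size_take_min (minn_idPl qs).
have sizeZ : size (drop (size s - q) s) = q by rewrite size_drop; lia.
have qF : (q - F = (d * F).+1)%N by rewrite /q mulSn; lia.
have Hbad : forall P : pred 'rV[R]_d, (forall j, j \notin Fs -> P (x k j)) ->
    (count (predC P) s <= F)%N.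
  move=> P HP; rewrite (permP Hperm) /X count_map.
  apply: (@leq_trans (count (fun j => j \in Fs) (enum (nbrs e i)))).
    apply: sub_count => j; rewrite /preim /=; case: (boolP (j \in Fs)) => // jF.
    by rewrite Hmsg // HP.
  rewrite count_enum_card; apply: leq_trans (Floc i).
  by apply: subset_leq_card; apply/subsetP => j; rewrite !inE andbC.
have Hgood : forall P : pred 'rV[R]_d, (forall j, j \notin Fs -> P (x k j)) ->
    (q - F <= count P (take q s))%N /\ (q - F <= count P (drop (size s - q) s))%N.
  move=> P HP; have := Hbad P HP.
  have := count_predC P (take q s); have := count_predC P (drop (size s - q) s).
  have := @count_take_le _ (predC P) s q; have := @count_drop_le _ (predC P) s (size s - q).
  rewrite sizeY sizeZ; lia.
split.
  move=> c thr Hthr.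
  have [h1 h2] := Hgood (fun v : 'rV[R]_d => (v 0 c <= thr)%R) Hthr.
  split; [apply: (Psi_le Hy) | apply: (Psi_le Hz)]; by rewrite ?sizeY ?sizeZ.
split.
  move=> c thr Hthr.
  have [h1 h2] := Hgood (fun v : 'rV[R]_d => (thr <= v 0 c)%R) Hthr.
  split; [apply: (Psi_ge Hy) | apply: (Psi_ge Hz)]; by rewrite ?sizeY ?sizeZ.
have Hcnt : forall (Q : pred V) (P : pred 'rV[R]_d),
    (forall j, j \notin Fs -> Q j -> P (x k j)) ->
    (#|[set j in nbrs e i | (j \notin Fs) && Q j]| <= count P s)%N.
  move=> Q P HQ; rewrite (permP Hperm) /X count_map -count_enum_card.
  apply: sub_count => j /= /andP [jF Qj].
  by rewrite Hmsg // HQ.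
split.
  move=> c thr kc Hc.
  have pc : Ordinal (ltn_pmod k hd) = c by apply: val_inj.
  rewrite pc in Hsort.
  apply: (Psi_le Hy); rewrite sizeY qF.
  apply: (@take_sorted_count _ (fun a b : 'rV[R]_d => (a 0 c <= b 0 c)%R)) => //.
  - by move=> a b c' h1 h2; exact: le_trans h1 h2.
  - by move=> a b h1 h2; exact: le_trans h1 h2.
  - apply: leq_trans Hc _; apply: (Hcnt (fun j => (x k j 0 c <= thr)%R)) => //.
  - by rewrite /q mulSn; lia.
move=> c thr kc Hc.
have pc : Ordinal (ltn_pmod k hd) = c by apply: val_inj.
rewrite pc in Hsort.
apply: (Psi_ge Hz); rewrite sizeZ qF.
apply: (@drop_sorted_count _ (fun a b : 'rV[R]_d => (a 0 c <= b 0 c)%R)) => //.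
- by move=> a b c' h1 h2; exact: le_trans h1 h2.
- by move=> a b h1 h2; exact: le_trans h2 h1.
- apply: leq_trans Hc _; apply: (Hcnt (fun j => (thr <= x k j 0 c)%R)) => //.
- by rewrite /q mulSn; lia.
Qed.

Definition Tw (d N : nat) : nat := (d * (2 * N).+1)%N.

Definition box (R : realType) (V : finType) (u : nat -> V -> R) (Fs : {set V})
  (k : nat) (lo hi : R) : Prop := forall i, i \notin Fs -> lo <= u k i <= hi.

Definition hypA (R : realType) (V : finType) (u : nat -> V -> R) (Fs : {set V}) : Prop :=
  forall k i hi a, i \notin Fs -> (forall j, j \notin Fs -> u k j <= hi) ->
    u k i <= a -> u k.+1 i <= (a + hi + hi) / 3.

Definition hypA' (R : realType) (V : finType) (u : nat -> V -> R) (Fs : {set V}) : Prop :=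
  forall k i lo a, i \notin Fs -> (forall j, j \notin Fs -> lo <= u k j) ->
    a <= u k i -> (a + lo + lo) / 3 <= u k.+1 i.

Definition hypB (R : realType) (V : finType) (e : rel V) (u : nat -> V -> R)
  (Fs : {set V}) (d F c : nat) : Prop :=
  forall k i hi thr, i \notin Fs -> (k %% d)%N = c ->
    (forall j, j \notin Fs -> u k j <= hi) ->
    ((d * F).+1 <= #|[set j in nbrs e i | (j \notin Fs) && (u k j <= thr)%R]|)%N ->
    u k.+1 i <= (hi + thr + hi) / 3.

Definition hypB' (R : realType) (V : finType) (e : rel V) (u : nat -> V -> R)
  (Fs : {set V}) (d F c : nat) : Prop :=
  forall k i lo thr, i \notin Fs -> (k %% d)%N = c ->
    (forall j, j \notin Fs -> lo <= u k j) ->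
    ((d * F).+1 <= #|[set j in nbrs e i | (j \notin Fs) && (thr <= u k j)%R]|)%N ->
    (lo + thr + lo) / 3 <= u k.+1 i.

Lemma box_inv (R : realType) (V : finType) (u : nat -> V -> R) (Fs : {set V}) :
  hypA u Fs -> hypA' u Fs ->
  forall k lo hi t, box u Fs k lo hi -> box u Fs (k + t) lo hi.
Proof.
move=> HA HA' k lo hi t Hb; elim: t => [|t IH]; first by rewrite addn0.
move=> i iF; rewrite addnS.
have /andP [h1 h2] := IH i iF.
have u1 := HA _ _ hi _ iF (fun j jF => proj2 (andP (IH j jF))) h2.
have u2 := HA' _ _ lo _ iF (fun j jF => proj1 (andP (IH j jF))) h1.
apply/andP; split; lra.
Qed.

Lemma monoR (T : finType) (S : nat -> {set T}) :
  (forall t, S t.+1 \subset S t) -> forall t1 t2, (t1 <= t2)%N -> S t2 \subset S t1.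
Proof.
move=> HS t1 t2 /subnK <-; elim: (t2 - t1)%N => [|n IH]; first by rewrite add0n.
by rewrite addSn; apply: subset_trans (HS _) IH.
Qed.

Lemma ne_sub (T : finType) (A B : {set T}) : A \subset B -> A != set0 -> B != set0.
Proof. by move=> sAB; apply: contraNneq => B0; rewrite -subset0 -B0. Qed.

Lemma exists_step (a d c : nat) : (0 < d)%N -> (c < d)%N ->
  exists2 j, (j < d)%N & ((a + j) %% d)%N = c.
Proof.
move=> d0 cd; exists ((c + (d - a %% d)) %% d)%N; first by rewrite ltn_pmod.
rewrite modnDmr -modnDml.
have r := ltn_pmod a d0.
have -> : (a %% d + (c + (d - a %% d)) = c + d)%N by lia.
by rewrite modnDr modn_small.
Qed.

Lemma window (R : realType) (V : finType) (e : rel V) (Fs : {set V}) (F d c : nat)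
    (u : nat -> V -> R) :
  (0 < d)%N -> (c < d)%N -> F_local e Fs F -> robust e (d.+1 * F).+1 ->
  hypA u Fs -> hypA' u Fs -> hypB e u Fs d F c -> hypB' e u Fs d F c ->
  forall k0 lo hi, box u Fs k0 lo hi ->
  exists lo' hi', box u Fs (k0 + Tw d #|V|) lo' hi' /\
    hi' - lo' <= (1 - (2 * 3 ^+ Tw d #|V|)^-1) * (hi - lo).
Proof.
move=> d0 cd Floc Hrob HA HA' HB HB' k0 lo hi Hbox.
set N := #|V|; set T := Tw d N.
have bx : forall t, box u Fs (k0 + t) lo hi by move=> t; exact: box_inv.
have a0 : 0 <= (2 * 3 ^+ T)^-1 :> R by rewrite invr_ge0 mulr_ge0 // exprn_ge0.
case: (lerP (hi - lo) 0) => [Wle|Wgt].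
  exists lo, hi; split; first exact: bx.
  nra.
pose eps (t : nat) : R := (hi - lo) * (2 * 3 ^+ t)^-1.
have p3 : forall t, 0 < 3 ^+ t :> R by move=> t; rewrite exprn_gt0.
have epsS : forall t, eps t.+1 = eps t / 3.
  move=> t; rewrite /eps exprS; field.
  by rewrite gt_eqF.
have epsE : forall t, eps t * (2 * 3 ^+ t) = hi - lo.
  move=> t; rewrite /eps -mulrA mulVf ?mulr1 //.
  by rewrite mulf_neq0 ?pnatr_eq0 // gt_eqF.
have eps_gt0 : forall t, 0 < eps t.
  by move=> t; rewrite /eps mulr_gt0 // invr_gt0 mulr_gt0.
have eps_le : forall t, eps t * 2 <= hi - lo.
  move=> t; have h1 : 1 <= 3 ^+ t :> R by rewrite exprn_ege1 // ler1n. 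
  have := epsE t; have := eps_gt0 t; nra.
pose SM t := [set i | (i \notin Fs) && (hi - eps t < u (k0 + t)%N i)].
pose Sm t := [set i | (i \notin Fs) && (u (k0 + t)%N i < lo + eps t)].
have monoM : forall t, SM t.+1 \subset SM t.
  move=> t; apply/subsetP => i; rewrite !inE => /andP [iF Hi]; rewrite iF /=.
  rewrite ltNge; apply/negP => Hle.
  have := HA (k0 + t)%N i hi (hi - eps t) iF
    (fun j jF => proj2 (andP (bx t j jF))) Hle.
  move: Hi; rewrite addnS epsS; lra.
have monom : forall t, Sm t.+1 \subset Sm t.
  move=> t; apply/subsetP => i; rewrite !inE => /andP [iF Hi]; rewrite iF /=.
  rewrite ltNge; apply/negP => Hle.
  have := HA' (k0 + t)%N i lo (lo + eps t) iF
    (fun j jF => proj1 (andP (bx t j jF))) Hle.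
  move: Hi; rewrite addnS epsS; lra.
have disj : forall t, [disjoint SM t & Sm t].
  move=> t; rewrite -setI_eq0; apply/eqP/setP => i; rewrite !inE.
  apply/negP => /andP [/andP [_ h1] /andP [_ h2]].
  have := eps_le t; lra.
have contr : forall t, ((k0 + t) %% d)%N = c -> SM t != set0 -> Sm t != set0 ->
    (SM t.+1 \proper SM t) \/ (Sm t.+1 \proper Sm t).
  move=> t tc neM nem.
  have [j1 j1M] := set0Pn _ neM; have [j2 j2m] := set0Pn _ nem.
  have pM : SM t \proper [set: V].
    rewrite properT; apply/negP => /eqP E.
    by move: (disjointFl (disj t) j2m); rewrite E inE.
  have pm : Sm t \proper [set: V].
    rewrite properT; apply/negP => /eqP E.
    by move: (disjointFr (disj t) j1M); rewrite E inE.
  case: (Hrob (SM t) (Sm t) neM nem pM pm (disj t)) => [[i iM Hi] | [i im Hi]].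
  - left; apply/properP; split; first exact: monoM.
    exists i => //.
    move: iM; rewrite !inE => /andP [iF _]; rewrite iF /= -leNgt.
    have sub : nbrs e i :\: SM t \subset (Fs :&: nbrs e i) :|:
        [set j in nbrs e i | (j \notin Fs) && (u (k0 + t)%N j <= hi - eps t)%R].
      apply/subsetP => j; rewrite !inE => /andP [njM jn].
      case: (boolP (j \in Fs)) => jF; first by rewrite jn.
      by rewrite jn /=; move: njM; rewrite jF /= -leNgt.
    have Hc : ((d * F).+1 <= #|[set j in nbrs e i |
        (j \notin Fs) && (u (k0 + t)%N j <= hi - eps t)%R]|)%N.
      have := subset_leq_card sub; rewrite cardsU.
      have := Floc i; move: Hi; rewrite mulSn; lia.
    have := HB (k0 + t)%N i hi (hi - eps t) iF tc
      (fun j jF => proj2 (andP (bx t j jF))) Hc.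
    rewrite addnS epsS; lra.
  - right; apply/properP; split; first exact: monom.
    exists i => //.
    move: im; rewrite !inE => /andP [iF _]; rewrite iF /= -leNgt.
    have sub : nbrs e i :\: Sm t \subset (Fs :&: nbrs e i) :|:
        [set j in nbrs e i | (j \notin Fs) && (lo + eps t <= u (k0 + t)%N j)%R].
      apply/subsetP => j; rewrite !inE => /andP [njm jn].
      case: (boolP (j \in Fs)) => jF; first by rewrite jn.
      by rewrite jn /=; move: njm; rewrite jF /= -leNgt.
    have Hc : ((d * F).+1 <= #|[set j in nbrs e i |
        (j \notin Fs) && (lo + eps t <= u (k0 + t)%N j)%R]|)%N.
      have := subset_leq_card sub; rewrite cardsU.
      have := Floc i; move: Hi; rewrite mulSn; lia.
    have := HB' (k0 + t)%N i lo (lo + eps t) iF tc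
      (fun j jF => proj1 (andP (bx t j jF))) Hc.
    rewrite addnS epsS; lra.
pose mu t := (#|SM t| + #|Sm t|)%N.
have muI : forall t1 t2, (t1 <= t2)%N -> (mu t2 <= mu t1)%N.
  move=> t1 t2 le12; rewrite /mu leq_add //; apply: subset_leq_card;
    exact: monoR.
have muS : forall t, ((k0 + t) %% d)%N = c -> SM t != set0 -> Sm t != set0 ->
    (mu t.+1 < mu t)%N.
  move=> t tc h1 h2; rewrite /mu.
  have s1 := subset_leq_card (monoM t); have s2 := subset_leq_card (monom t).
  case: (contr t tc h1 h2) => /proper_card; lia.
have block : forall n, SM (d * n) != set0 -> Sm (d * n) != set0 ->
    (mu (d * n) + n <= 2 * N)%N.
  elim => [|n IH] hM hm.
    rewrite muln0 addn0 /mu.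
    have c1 : (#|SM 0%N| <= N)%N by rewrite /N; apply: max_card.
    have c2 : (#|Sm 0%N| <= N)%N by rewrite /N; apply: max_card.
    lia.
  have le1 : (d * n <= d * n.+1)%N by rewrite leq_mul2l ltnW ?orbT.
  have [j jd jc] := exists_step (k0 + d * n) d0 cd.
  have le2 : (d * n + j <= d * n.+1)%N by rewrite mulnS; lia.
  have ne1 : forall t, (t <= d * n.+1)%N -> SM t != set0.
    by move=> t lt; apply: ne_sub hM; apply: monoR.
  have ne2 : forall t, (t <= d * n.+1)%N -> Sm t != set0.
    by move=> t lt; apply: ne_sub hm; apply: monoR.
  have := IH (ne1 _ le1) (ne2 _ le1).
  have tc : ((k0 + (d * n + j)) %% d)%N = c by rewrite addnA.
  have := muS (d * n + j)%N tc (ne1 _ le2) (ne2 _ le2).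
  have := muI (d * n)%N (d * n + j)%N (leq_addr _ _).
  have le3 : (d * n + j < d * n.+1)%N by rewrite mulnS; lia.
  have := muI (d * n + j).+1 (d * n.+1)%N le3.
  lia.
have [E|E] : SM T == set0 \/ Sm T == set0.
  case: (boolP (SM T == set0)) => hM; [by left|].
  case: (boolP (Sm T == set0)) => hm; [by right|].
  by have := block (2 * N).+1 hM hm; lia.
- exists lo, (hi - eps T); split.
    move=> i iF; have /andP [h1 h2] := bx T i iF.
    have : i \notin SM T by rewrite (eqP E) inE.
    rewrite !inE iF /= -leNgt => h3.
    by apply/andP; split.
  rewrite /eps; nra.
- exists (lo + eps T), hi; split.
    move=> i iF; have /andP [h1 h2] := bx T i iF.
    have : i \notin Sm T by rewrite (eqP E) inE.
    rewrite !inE iF /= -leNgt => h3.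
    by apply/andP; split.
  rewrite /eps; nra.
Qed.

Lemma bernoulli (R : realFieldType) (a : R) (n : nat) :
  0 <= a -> a <= 1 -> 1 - n%:R * a <= (1 - a) ^+ n.
Proof.
move=> a0 a1; elim: n => [|n IH]; first by rewrite mul0r subr0 expr0.
rewrite exprS -natr1.
have h : (1 - n%:R * a) * (1 - a) <= (1 - a) * (1 - a) ^+ n.
  by rewrite mulrC ler_wpM2l // subr_ge0.
have n0 : 0 <= n%:R :> R by [].
apply: le_trans h; nra.
Qed.

Definition rho_of (R : realType) (d N : nat) : R :=
  1 - (2 * 3 ^+ Tw d N * (Tw d N)%:R)^-1.

Lemma rho_props (R : realType) (d N : nat) : (0 < d)%N ->
  [/\ 0 < rho_of R d N, rho_of R d N < 1,
      0 <= 1 - (2 * 3 ^+ Tw d N)^-1 :> R &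
      1 - (2 * 3 ^+ Tw d N)^-1 <= rho_of R d N ^+ Tw d N].
Proof.
move=> d0.
set T := Tw d N.
have T0 : (0 < T)%N by rewrite /T /Tw muln_gt0 d0.
have T1 : 1 <= T%:R :> R by rewrite ler1n.
have p3 : 1 <= 3 ^+ T :> R by rewrite exprn_ege1 // ler1n.
have b0 : 0 < 2 * 3 ^+ T * T%:R :> R by rewrite !mulr_gt0 //; lra.
have b1 : 2 <= 2 * 3 ^+ T * T%:R :> R.
  have : 1 <= 3 ^+ T * T%:R :> R by nra.
  lra.
have c0 : 0 < 2 * 3 ^+ T :> R by rewrite mulr_gt0 //; lra.
have c1 : 2 <= 2 * 3 ^+ T :> R by lra.
have ia : (2 * 3 ^+ T * T%:R)^-1 <= 2^-1 :> R.
  by rewrite lef_pV2 ?posrE //; lra.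
have ia0 : 0 < (2 * 3 ^+ T * T%:R)^-1 :> R by rewrite invr_gt0.
have ib : (2 * 3 ^+ T)^-1 <= 2^-1 :> R by rewrite lef_pV2 ?posrE //; lra.
have ib0 : 0 < (2 * 3 ^+ T)^-1 :> R by rewrite invr_gt0.
rewrite /rho_of -/T; split; try lra.
apply: le_trans (bernoulli _ _ _); [|lra|lra].
have -> : T%:R * (2 * 3 ^+ T * T%:R)^-1 = (2 * 3 ^+ T)^-1 :> R.
  field; apply/andP; split; rewrite gt_eqF //; lra.
lra.
Qed.

Lemma scalar_conv (R : realType) (V : finType) (e : rel V) (Fs : {set V}) (F d c : nat)
    (u : nat -> V -> R) (K : R) :
  (0 < d)%N -> (c < d)%N -> F_local e Fs F -> robust e (d.+1 * F).+1 ->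
  hypA u Fs -> hypA' u Fs -> hypB e u Fs d F c -> hypB' e u Fs d F c ->
  0 <= K -> box u Fs 0 (- K) K ->
  exists xb : R, forall k i, i \notin Fs ->
    `|u k i - xb| <= (2 * K / rho_of R d #|V| ^+ Tw d #|V|) * rho_of R d #|V| ^+ k.
Proof.
move=> d0 cd Floc Hrob HA HA' HB HB' K0 Hb0.
have [r0 r1 g0 gT] := rho_props R #|V| d0.
set T := Tw d #|V| in gT g0 *; set rho := rho_of R d #|V| in r0 r1 gT *.
have T0 : (0 < T)%N by rewrite /T /Tw muln_gt0 d0.
have rT0 : 0 < rho ^+ T by rewrite exprn_gt0.
set C := 2 * K / rho ^+ T.
have C0 : 0 <= C by rewrite /C divr_ge0 ?mulr_ge0 // ltW.
have CT : C * rho ^+ T = 2 * K by rewrite /C -mulrA mulVf ?mulr1 // gt_eqF.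
have wid : forall k, exists lo hi, box u Fs k lo hi /\ hi - lo <= C * rho ^+ k.
  elim/ltn_ind => k IH.
  case: (ltnP k T) => kT.
  - exists (- K), K; split.
      by have := box_inv HA HA' k Hb0; rewrite add0n.
    have h : rho ^+ T <= rho ^+ k by apply: ler_wiXn2l; [exact: ltW|exact: ltW|exact: ltnW].
    have := ler_wpM2l C0 h; rewrite CT; lra.
  - have kT' : (k - T < k)%N by lia.
    have [lo [hi [Hb Hw]]] := IH (k - T)%N kT'.
    have [lo' [hi' [Hb' Hw']]] := window d0 cd Floc Hrob HA HA' HB HB' Hb.
    rewrite subnK // in Hb'.
    exists lo', hi'; split => //.
    have e1 : rho ^+ k = rho ^+ (k - T) * rho ^+ T by rewrite -exprD subnK.
    have p1 : 0 <= C * rho ^+ (k - T) by rewrite mulr_ge0 // exprn_ge0 // ltW.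
    have h1 := ler_wpM2l g0 Hw.
    have h2 := ler_wpM2r p1 gT.
    rewrite e1; apply: le_trans Hw' _; apply: le_trans h1 _.
    rewrite mulrA; apply: le_trans h2 _; rewrite mulrC; lra.
case: (pickP (fun i => i \notin Fs)) => [i0 i0F | none]; last first.
  by exists 0 => k i iF; have := none i; rewrite iF.
pose E := (fun l : R => exists k, forall j i, i \notin Fs -> l <= u (k + j)%N i).
have Eub : forall k lo hi, box u Fs k lo hi -> ubound E hi.
  move=> k lo hi Hb l [k' Hk].
  have h1 := Hk k i0 i0F; rewrite addnC in h1.
  have /andP [_ h] := box_inv HA HA' k' Hb i0F.
  exact: le_trans h1 h.
have Elb : forall k lo hi, box u Fs k lo hi -> E lo.
  move=> k lo hi Hb; exists k => j i iF.
  by have /andP [h _] := box_inv HA HA' j Hb iF.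
have Ene : exists x, E x by exists (- K); exact: Elb Hb0.
have Ehas : has_ubound E by exists K; exact: Eub Hb0.
exists (sup E) => k i iF.
have [lo [hi [Hb Hw]]] := wid k.
have s1 : lo <= sup E by apply: ub_le_sup Ehas _ (Elb _ _ _ Hb).
have s2 : sup E <= hi by apply: ge_sup Ene (Eub _ _ _ Hb).
have /andP [u1 u2] := Hb i iF.
rewrite ler_norml; apply/andP; split; lra.
Qed.

Unset Implicit Arguments.

Lemma le_sum_term (R : realType) (I : finType) (f : I -> R) (i : I) :
  (forall j, 0 <= f j) -> f i <= \sum_j f j.
Proof. by move=> f0; rewrite (bigD1 i) //= lerDl sumr_ge0. Qed.

Theorem proposition2 (R : realType) (d : nat) (hd : (0 < d)%N)
    (V : finType) (e : rel V) (F : nat) (Fs : {set V})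
    (x : nat -> V -> 'rV[R]_d) (msg : nat -> V -> V -> 'rV[R]_d) :
  symmetric e -> irreflexive e ->
  (forall i : V, ((d.+1 * F).+1 <= #|nbrs e i|)%N) ->
  F_local e Fs F ->
  robust e (d.+1 * F).+1 ->
  (* msg k j i : value sent by j to i at time k; benign agents send their state *)
  (forall k (j i : V), j \notin Fs -> msg k j i = x k j) ->
  (forall k (i : V), i \notin Fs ->
     resilient_step F k hd [seq msg k j i | j <- enum (nbrs e i)] (x k i) (x k.+1 i)) ->
  exists xbar : 'rV[R]_d, exists C rho : R,
    0 <= C /\ 0 <= rho < 1 /\
    forall (k : nat) (i : V), i \notin Fs ->
      forall c : 'I_d, `|x k i 0 c - xbar 0 c| <= C * rho ^+ k.
Proof.
move=> _ _ Hdeg Floc Hrob Hmsg Hres.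
have Hstep := fun k i (iF : i \notin Fs) =>
  step_bounds (Hdeg i) Floc (fun j jF => Hmsg k j i jF) (Hres k i iF).
set K : R := \sum_i \sum_(c : 'I_d) `|x 0%N i 0 c|.
have K0 : 0 <= K by apply: sumr_ge0 => i _; apply: sumr_ge0.
have [r0 r1 _ _] := rho_props R #|V| hd.
set rho := rho_of R d #|V| in r0 r1.
set C := 2 * K / rho ^+ Tw d #|V|.
have C0 : 0 <= C by rewrite /C divr_ge0 ?mulr_ge0 // exprn_ge0 // ltW.
have Hc : forall c : 'I_d, exists xb : R, forall k i, i \notin Fs ->
    `|x k i 0 c - xb| <= C * rho ^+ k.
  move=> c.
  apply: (@scalar_conv R V e Fs F d c (fun k i => x k i 0 c) K hd (ltn_ord c)
            Floc Hrob) => //.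
  - move=> k i hi a iF Hj Ha.
    have [y [z [Hx [H1 _]]]] := Hstep k i iF.
    have [hy hz] := H1 c hi Hj.
    rewrite /= Hx !mxE; lra.
  - move=> k i lo a iF Hj Ha.
    have [y [z [Hx [_ [H2 _]]]]] := Hstep k i iF.
    have [hy hz] := H2 c lo Hj.
    rewrite /= Hx !mxE; lra.
  - move=> k i hi thr iF kc Hj Hcnt.
    have [y [z [Hx [H1 [_ [H3 _]]]]]] := Hstep k i iF.
    have [hy hz] := H1 c hi Hj.
    have h3 := H3 c thr kc Hcnt.
    have := Hj i iF; rewrite /= Hx !mxE; lra.
  - move=> k i lo thr iF kc Hj Hcnt.
    have [y [z [Hx [_ [H2 [_ H4]]]]]] := Hstep k i iF.
    have [hy hz] := H2 c lo Hj.
    have h4 := H4 c thr kc Hcnt.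
    have := Hj i iF; rewrite /= Hx !mxE; lra.
  - move=> i iF /=; rewrite -ler_norml.
    have h1 := @le_sum_term _ _ (fun c' => `|x 0%N i 0 c'|) c (fun _ => normr_ge0 _).
    have h2 := @le_sum_term _ _ (fun i' => \sum_(c' : 'I_d) `|x 0%N i' 0 c'|) i
      (fun _ => sumr_ge0 _ (fun _ _ => normr_ge0 _)).
    exact: le_trans h1 h2.
have [f Hf] := fin_all_exists Hc.
exists (\row_c f c), C, rho; split => //; split; first by rewrite ltW.
by move=> k i iF c; rewrite mxE; exact: Hf.
Qed.
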